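(* Consider $n$ birds in $\mathbb{R}^d$ evolving noise-free by $x(t)=x(t-1)+v(t)$, $v(t+1)=(P\otimes I_d)v(t)$ ($t\ge1$), where the flocking network is a fixed connected graph $G$ for all $t$ and $P=I_n-CL$ is the corresponding fixed transition matrix. Let $\pi=(\mathrm{tr}\,C^{-1})^{-1}C^{-1}\mathbf{1}$, let $\Gamma=\lim_{t\to\infty}\bigl(-\mathbf{1}\pi^Tt+\sum_{s=0}^{t-1}P^s\bigr)$, let $\mathbf{m}_\pi[x(t)]=(\pi^T\otimes I_d)x(t)$ (the mass center), and let $x^r(t)=x(t)-(\mathbf{1}\otimes I_d)\mathbf{m}_\pi[x(t)]$. Then $x^r(t)$ converges to $x^r=((I_n-\mathbf{1}\pi^T)\otimes I_d)x(0)+(\Gamma\otimes I_d)v(1)$, and the mass center $\mathbf{m}_\pi[x(t)]$ moves in $\mathbb{R}^d$ at constant speed in a fixed direction.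
   Context: $G$ is a connected undirected graph without self-loops on $n$ vertices with degrees $d_i$ and Laplacian $L$; $C=\mathrm{diag}(c_1,\dots,c_n)$ with positive rationals $c_i$ of $O(\log n)$ bits and $c_id_i<1$. $\mathbf{1}$ is the all-ones vector. *)

(* Defs.v *)
From HB Require Import structures.
From mathcomp Require Import all_boot all_order all_algebra.
From mathcomp Require Import all_classical all_reals all_analysis.
Set Implicit Arguments. Unset Strict Implicit. Unset Printing Implicit Defensive.
Import Order.TTheory GRing.Theory Num.Theory.
Local Open Scope ring_scope.

Definition simple_graph (n : nat) (e : rel 'I_n) : Prop :=
  symmetric e /\ irreflexive e.

Definition connected_graph (n : nat) (e : rel 'I_n) : Prop :=
  forall i j : 'I_n, connect e i j.

Definition deg (n : nat) (e : rel 'I_n) (i : 'I_n) : nat := #|[set j | e i j]|.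

Definition laplacian (R : nzRingType) (n : nat) (e : rel 'I_n) : 'M[R]_n :=
  \matrix_(i, j) (if i == j then (deg e i)%:R else - (e i j)%:R).

Definition Cmat (R : nzRingType) (n : nat) (c : 'I_n -> R) : 'M[R]_n :=
  diag_mx (\row_i c i).

Definition transP (R : nzRingType) (n : nat) (e : rel 'I_n) (c : 'I_n -> R)
  : 'M[R]_n := 1%:M - Cmat c *m laplacian R e.

Definition ones (R : nzRingType) (n : nat) : 'cV[R]_n := const_mx 1.

Definition piv (R : fieldType) (n : nat) (c : 'I_n -> R) : 'cV[R]_n :=
  (\tr (invmx (Cmat c)))^-1 *: (invmx (Cmat c) *m ones R n).

Definition Gamma_seq (R : fieldType) (n : nat) (e : rel 'I_n) (c : 'I_n -> R)
  (t : nat) : 'M[R]_n :=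
  - ((ones R n *m (piv c)^T) *+ t) + \sum_(s < t) (transP e c) ^+ s.

(* Positions / velocities of the n birds in R^d are stored as n x d matrices
   (row i = bird i); the Kronecker product (A \otimes I_d) acting on the
   stacked vector corresponds to left multiplication A *m X. *)

Definition mass_center (R : fieldType) (n d : nat) (c : 'I_n -> R)
  (X : 'M[R]_(n, d)) : 'rV[R]_d := (piv c)^T *m X.

Definition rel_pos (R : fieldType) (n d : nat) (c : 'I_n -> R)
  (X : 'M[R]_(n, d)) : 'M[R]_(n, d) := X - ones R n *m mass_center c X.

(* Main.v *)
Set Warnings "-all".
Require Import Defs.
From HB Require Import structures.
From mathcomp Require Import all_boot all_order all_algebra.
From mathcomp Require Import all_classical all_reals all_analysis.
From mathcomp Require Import ring lra zify.
Import Order.TTheory GRing.Theory Num.Theory.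
Import numFieldNormedType.Exports.
Local Open Scope classical_set_scope.
Local Open Scope ring_scope.

Section Basic.
Variables (R : realType) (n : nat) (e : rel 'I_n) (c : 'I_n -> R).
Hypothesis (Hsym : symmetric e) (Hirr : irreflexive e).
Hypothesis (Hc : forall i, 0 < c i) (Hcd : forall i, c i * (deg e i)%:R < 1).

Lemma L_sym i j : laplacian R e i j = laplacian R e j i.
Proof. by rewrite !mxE eq_sym Hsym; case: eqP => // ->. Qed.

Lemma L_entry i j : laplacian R e i j = (i == j)%:R * (deg e i)%:R - (e i j)%:R.
Proof.
rewrite !mxE; case: eqP => [->|_]; first by rewrite Hirr mul1r subr0.
by rewrite mul0r sub0r.
Qed.

Lemma deg_sum i : \sum_j ((e i j)%:R : R) = (deg e i)%:R.
Proof.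
rewrite -natr_sum /deg -sum1dep_card [in RHS]big_mkcond /=.
by congr (_%:R); apply: eq_bigr => j _; case: (e i j).
Qed.

Lemma L_rowsum i : \sum_j laplacian R e i j = 0.
Proof.
under eq_bigr do rewrite L_entry.
rewrite sumrB deg_sum (bigD1 i) //= eqxx mul1r big1 ?addr0 ?subrr //.
by move=> j /negbTE; rewrite eq_sym => ->; rewrite mul0r.
Qed.

Lemma P_entry i j : transP e c i j = (i == j)%:R - c i * laplacian R e i j.
Proof. by rewrite /transP /Cmat mul_diag_mx !mxE. Qed.

Lemma P_ge0 i j : 0 <= transP e c i j.
Proof.
rewrite P_entry L_entry; case: eqP => [->|/eqP ij]; rewrite ?Hirr.
  by rewrite mul1r subr0 subr_ge0; apply: ltW.
rewrite -[false%:R]/(0%:R) mulr0n !mul0r !sub0r mulrN opprK; apply: mulr_ge0; [exact: ltW | exact: ler0n].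
Qed.

Lemma P_diag_gt0 i : 0 < transP e c i i.
Proof. by rewrite P_entry L_entry eqxx Hirr mul1r subr0 subr_gt0. Qed.

Lemma P_edge_gt0 i j : e i j -> 0 < transP e c i j.
Proof.
move=> eij; rewrite P_entry L_entry.
have -> : (i == j) = false by apply/eqP => ij; rewrite ij Hirr in eij.
by rewrite eij !mul0r !sub0r mulrN opprK mulr1.
Qed.

Lemma P_rowsum i : \sum_j transP e c i j = 1.
Proof.
under eq_bigr do rewrite P_entry.
rewrite sumrB -mulr_sumr L_rowsum mulr0 subr0 (bigD1 i) //= eqxx big1 ?addr0 //.
by move=> j /negbTE; rewrite eq_sym => ->.
Qed.

Definition cinv := diag_mx (\row_i (c i)^-1).

Lemma invC : invmx (Cmat c) = cinv.
Proof.
have H : Cmat c *m cinv = 1%:M.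
  rewrite /Cmat /cinv mulmx_diag; apply/matrixP => i j; rewrite !mxE.
  by rewrite mulfV // gt_eqF.
have [U _] := mulmx1_unit H.
by rewrite -[invmx _]mulmx1 -H mulmxA mulVmx // mul1mx.
Qed.

Definition Tc := \sum_k (c k)^-1.

Lemma piv_entry k : piv c k 0 = Tc^-1 * (c k)^-1.
Proof.
rewrite /piv invC /cinv mxtrace_diag mxE mul_diag_mx !mxE.
rewrite /Tc; under [X in X^-1 * _]eq_bigr do rewrite mxE.
by rewrite mulr1.
Qed.

Lemma piv_ge0 k : 0 <= piv c k 0.
Proof.
rewrite piv_entry; apply: mulr_ge0; rewrite invr_ge0; [apply: sumr_ge0 => j _; rewrite invr_ge0 | ]; exact: ltW.
Qed.

Lemma piv_sum (k0 : 'I_n) : \sum_k piv c k 0 = 1.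
Proof.
under eq_bigr do rewrite piv_entry.
rewrite -mulr_sumr mulVf // /Tc (bigD1 k0) //= gt_eqF //.
by rewrite ltr_wpDr ?sumr_ge0 ?invr_gt0 // => j _; rewrite invr_ge0 ltW.
Qed.

Lemma piv_P : (piv c)^T *m transP e c = (piv c)^T.
Proof.
apply/matrixP => z j; rewrite (ord1 z) [RHS]mxE.
rewrite mxE; under eq_bigr do rewrite mxE P_entry piv_entry mulrBr.
rewrite sumrB (bigD1 j) //= eqxx mulr1 big1; last first.
  by move=> k /negbTE; rewrite eq_sym => ->; rewrite mulr0.
rewrite addr0 piv_entry.
under eq_bigr do rewrite mulrA -(mulrA _ _ (c _)) mulVf ?gt_eqF // mulr1 L_sym.
by rewrite -mulr_sumr L_rowsum mulr0 subr0.
Qed.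

End Basic.
Section Pos.
Variables (R : realType) (n : nat) (e : rel 'I_n) (A : 'M[R]_n).
Hypothesis (A0 : forall i j, 0 <= A i j) (Ad : forall i, 0 < A i i)
  (Ae : forall i j, e i j -> 0 < A i j).

Lemma powA_ge0 k i j : 0 <= (A ^+ k) i j.
Proof.
elim: k i j => [|k IH] i j; first by rewrite expr0 mxE ler0n.
rewrite exprS -mulmxE mxE; apply: sumr_ge0 => l _; exact: mulr_ge0.
Qed.

Lemma sum_gt0_single (F : 'I_n -> R) l : (forall l, 0 <= F l) -> 0 < F l ->
  0 < \sum_l F l.
Proof.
move=> F0 Fl; rewrite (bigD1 l) //=; apply: (lt_le_trans Fl).
by rewrite lerDl; apply: sumr_ge0 => ? _.
Qed.

Lemma powA_mono k k' i j : 0 < (A ^+ k) i j -> (k <= k')%N -> 0 < (A ^+ k') i j.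
Proof.
move=> H /subnK <-; elim: (k' - k)%N => [|m IH]; first by [].
rewrite addSn exprSr -mulmxE mxE; apply: (@sum_gt0_single (fun l => (A ^+ (m + k)) i l * A l j) j).
  by move=> l; apply: mulr_ge0 => //; apply: powA_ge0.
exact: mulr_gt0.
Qed.

Lemma powA_path p i : path e i p -> forall k, (size p <= k)%N ->
  0 < (A ^+ k) i (last i p).
Proof.
elim: p i => [|y p IH] i /=.
  move=> _ k _; apply: (@powA_mono 0) => //; by rewrite expr0 mxE eqxx ltr01.
move=> /andP[eiy py] [//|k] Hk.
rewrite exprS -mulmxE mxE; apply: (@sum_gt0_single (fun l => A i l * (A ^+ k) l (last y p)) y).
  by move=> l; apply: mulr_ge0 => //; apply: powA_ge0.
by apply: mulr_gt0; [exact: Ae | exact: IH].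
Qed.

Lemma powA_pos : (forall i j, connect e i j) -> forall i j, 0 < (A ^+ n) i j.
Proof.
move=> Hc i j; have /connectP [p pth ->] := Hc i j.
case: (shortenP pth) => p' pth' up' _.
apply: powA_path => //.
have := card_uniqP up' => /= Hs.
have : (#|i :: p'| <= #|'I_n|)%N by apply: max_card.
by rewrite Hs card_ord; apply: ltnW.
Qed.
End Pos.
Lemma exists_delta (R : realType) (T : finType) (f : T -> R) :
  (forall t, 0 < f t) -> exists d : R, [/\ 0 < d, d <= 1 & forall t, d <= f t].
Proof.
move=> fp.
suff HH : forall s : seq T, exists d : R,
    [/\ 0 < d, d <= 1 & forall t, t \in s -> d <= f t].
  have [d [d0 d1 H]] := HH (enum T).
  by exists d; split => // t; apply: H; rewrite mem_enum.
elim=> [|x s [d [d0 d1 H]]]; first by exists 1; split => //; rewrite ltr01.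
exists (Num.min d (f x)); split.
- by rewrite lt_min d0 fp.
- by rewrite ge_min d1.
- move=> t; rewrite in_cons => /orP[/eqP ->|ts]; first by rewrite ge_min lexx orbT.
  by rewrite ge_min H.
Qed.

Section Bnd.
Variables (R : realType) (n : nat).

Definition Bnd m (U : 'M[R]_(n, m)) (r : R) := forall i j l, U i l - U j l <= r.
Arguments Bnd {m}.

Lemma bnd_step m (A : 'M[R]_n) (U : 'M[R]_(n, m)) r d :
  (forall i k, d <= A i k) -> (forall i k, 0 <= A i k) ->
  (forall i, \sum_k A i k = 1) -> Bnd U r -> Bnd (A *m U) ((1 - d) * r).
Proof.
move=> Ad A0 A1 HU i j l.
have r0 : 0 <= r by have := HU i i l; rewrite subrr.
pose u k := U k l.
have [k0 _ Hk0] := @arg_minP _ R _ i xpredT u isT.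
have key : forall i', u k0 <= (A *m U) i' l <= u k0 + (1 - d) * r.
  move=> i'; rewrite mxE.
  have -> : \sum_k A i' k * U k l = u k0 + \sum_k A i' k * (u k - u k0).
    under [in RHS]eq_bigr do rewrite mulrBr.
    by rewrite sumrB -mulr_suml A1 mul1r addrC subrK.
  rewrite lerDl; apply/andP; split.
    apply: sumr_ge0 => k _; apply: mulr_ge0 => //.
    by rewrite subr_ge0; apply: Hk0.
  rewrite lerD2l.
  apply: (@le_trans _ _ (\sum_k (A i' k * r - (k == k0)%:R * (d * r)))).
    apply: ler_sum => k _; case: eqP => [->|/eqP nk].
      by rewrite subrr mulr0 mul1r subr_ge0 ler_wpM2r.
    rewrite mul0r subr0; apply: ler_wpM2l => //; exact: HU.
  rewrite sumrB -mulr_suml A1 mul1r (bigD1 k0) //= eqxx mul1r big1 ?addr0.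
    by rewrite mulrBl mul1r.
  by move=> k /negbTE ->; rewrite mul0r.
have /andP[a1 a2] := key i; have /andP[b1 b2] := key j.
rewrite /u in a1 a2 b1 b2.
have : (A *m U) i l - (A *m U) j l <= (U k0 l + (1 - d) * r) - U k0 l.
  by apply: lerB.
by rewrite addrAC subrr add0r.
Qed.

Section Iter.
Variables (A : 'M[R]_n) (N : nat) (d : R).
Hypotheses (A0 : forall i k, 0 <= A i k) (A1 : forall i, \sum_k A i k = 1).
Hypotheses (d0 : 0 < d) (d1 : d <= 1) (AN : forall i k, d <= (A ^+ N) i k).

Lemma powA_ge0' k i j : 0 <= (A ^+ k) i j.
Proof.
elim: k i j => [|k IH] i j; first by rewrite expr0 mxE ler0n.
rewrite exprS -mulmxE mxE; apply: sumr_ge0 => l _; exact: mulr_ge0.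
Qed.

Lemma powA_sum k i : \sum_j (A ^+ k) i j = 1.
Proof.
elim: k i => [|k IH] i.
  rewrite expr0 (bigD1 i) //= mxE eqxx big1 ?addr0 // => j /negbTE.
  by rewrite mxE eq_sym => ->.
rewrite exprS -mulmxE; under eq_bigr do rewrite mxE.
rewrite exchange_big /=; under eq_bigr do rewrite -mulr_sumr IH mulr1.
exact: A1.
Qed.

Lemma bnd_pow_small r : Bnd (A ^+ r) 1.
Proof.
elim: r => [|r IH].
  move=> i j l; rewrite expr0 !mxE.
  by case: (i == l); case: (j == l); rewrite /= ?subrr ?subr0 ?sub0r ?lerN10 ?ler01 ?lexx.
rewrite exprS -mulmxE.
have H := @bnd_step _ A (A ^+ r) 1 0; rewrite subr0 mul1r in H.
by apply: H => //.
Qed.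

Lemma bnd_pow s : Bnd (A ^+ s) ((1 - d) ^+ (s %/ N)).
Proof.
rewrite {1}(divn_eq s N) exprD mulnC exprM.
elim: (s %/ N)%N => [|q IH]; first by rewrite !expr0 mul1r; apply: bnd_pow_small.
rewrite exprS -mulrA -mulmxE exprS.
apply: bnd_step => //; [move=> ? ?; exact: powA_ge0' | move=> ?; exact: powA_sum].
Qed.

End Iter.

Lemma dev_bound (Q : 'M[R]_n) (p : 'I_n -> R) r i j : Bnd Q r ->
  (forall k, 0 <= p k) -> \sum_k p k = 1 ->
  `|Q i j - \sum_k p k * Q k j| <= r.
Proof.
move=> HQ p0 p1.
have -> : Q i j - \sum_k p k * Q k j = \sum_k p k * (Q i j - Q k j).
  under [RHS]eq_bigr do rewrite mulrBr.
  by rewrite sumrB -mulr_suml p1 mul1r.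
apply: (le_trans (ler_norm_sum _ _ _)).
apply: (@le_trans _ _ (\sum_k p k * r)); last by rewrite -mulr_suml p1 mul1r.
apply: ler_sum => k _; rewrite normrM ger0_norm //; apply: ler_wpM2l => //.
by rewrite ler_norml HQ andbT lerNl opprB HQ.
Qed.

End Bnd.

Lemma cvg_bounded_sum (R : realType) (D f : nat -> R) (B : R) :
  (forall s, `|D s| <= f s) -> (forall t, \sum_(s < t) f s <= B) ->
  cvgn (fun t => \sum_(s < t) D s).
Proof.
move=> Df FB.
have f0 s : 0 <= f s by apply: le_trans (Df s).
have Ff : cvgn (fun t => \sum_(s < t) f s).
  apply: nondecreasing_is_cvgn.
    apply/nondecreasing_seqP => t; rewrite big_ord_recr /= lerDl; exact: f0.
  by exists B => _ [t _ <-].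
have GF : cvgn (fun t => \sum_(s < t) D s + \sum_(s < t) f s).
  apply: nondecreasing_is_cvgn.
    apply/nondecreasing_seqP => t; rewrite !big_ord_recr /=.
    rewrite addrACA lerDl -lerBlDr sub0r.
    by have := Df t; rewrite ler_norml => /andP[].
  exists (B + B) => _ [t _ <-]; apply: lerD => //.
  apply: le_trans (FB t); apply: ler_sum => s _.
  by have := Df s; rewrite ler_norml => /andP[].
have -> : (fun t => \sum_(s < t) D s) = (fun t => \sum_(s < t) D s + \sum_(s < t) f s) - (fun t => \sum_(s < t) f s).
  by apply: funext => t /=; rewrite addrK.
exact: is_cvgB.
Qed.

Section Block.
Variables (R : realType) (N : nat) (d : R).
Hypotheses (N0 : (0 < N)%N) (d0 : 0 < d) (d1 : d <= 1).
Let f s := (1 - d) ^+ (s %/ N).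

Lemma f_ge0 s : 0 <= f s.
Proof. by rewrite /f exprn_ge0 // subr_ge0. Qed.

Lemma f_mono s t : (t <= s)%N -> f s <= f t.
Proof.
move=> ts; rewrite /f ler_wiXn2l //; first by rewrite subr_ge0.
  by rewrite gerBl ltW.
exact: leq_div2r.
Qed.

Lemma f_shift t : f (t + N) = (1 - d) * f t.
Proof. by rewrite /f divnDr ?dvdnn // divnn N0 addn1 exprS. Qed.

Lemma blocksum k t : \sum_(t <= s < t + k) f s <= N%:R / d * f t.
Proof.
elim/ltn_ind: k t => k IH t.
have ft0 := f_ge0 t.
have Nd : N%:R <= N%:R / d.
  by rewrite ler_pdivlMr // ler_piMr // ler0n.
case: (leqP k N) => kN.
  apply: (@le_trans _ _ (\sum_(t <= s < t + k) f t)).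
    apply: ler_sum_nat => s /andP[ts _]; exact: f_mono.
  rewrite sumr_const_nat addKn -[f t *+ _]mulr_natl.
  apply: ler_wpM2r => //; apply: le_trans Nd; rewrite ler_nat //.
rewrite (@big_cat_nat _ _ _ (t + N)) //=; last by rewrite leq_add2l ltnW.
  2: by rewrite leq_addr.
have -> : (t + k = (t + N) + (k - N))%N by rewrite -addnA subnKC // ltnW.
have kk : (k - N < k)%N by lia.
have H1 := IH (k - N)%N kk (t + N)%N.
rewrite f_shift in H1.
have H2 : \sum_(t <= s < t + N) f s <= N%:R * f t.
  apply: (@le_trans _ _ (\sum_(t <= s < t + N) f t)).
    apply: ler_sum_nat => s /andP[ts _]; exact: f_mono.
  by rewrite sumr_const_nat addKn -[f t *+ _]mulr_natl.
apply: (le_trans (lerD H2 H1)).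
have -> : N%:R / d * f t = N%:R * f t + N%:R / d * ((1 - d) * f t).
  by field; rewrite gt_eqF.
by [].
Qed.

End Block.
Lemma cvg_mx_entry (R : realType) m n (f : nat -> 'M[R]_(m, n)) (l : 'M[R]_(m, n)) :
  (forall i j, (fun t => f t i j) @ \oo --> l i j) -> f @ \oo --> l.
Proof.
move=> H; apply/cvgrPdist_le => /= eps e0.
near=> t.
rewrite /Num.Def.normr/= mx_normrE (bigmax_le _ (ltW e0))//= => ij _.
rewrite !mxE/=.
move: ij; near: t; apply: filter_forall => /= ij.
exact: ((cvgrPdist_le _ _).1 (H ij.1 ij.2)).
Unshelve. all: by end_near. Qed.

Lemma cvg_sum_seq (R : realType) (I : Type) (r : seq I) (f : I -> nat -> R) (l : I -> R) :
  (forall i, f i @ \oo --> l i) ->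
  (fun t => \sum_(i <- r) f i t) @ \oo --> \sum_(i <- r) l i.
Proof.
move=> H; elim: r => [|a r IH].
  rewrite big_nil; under eq_fun do rewrite big_nil; exact: cvg_cst.
rewrite big_cons; under eq_fun do rewrite big_cons.
exact: cvgD.
Qed.

Lemma trE (R : Type) m k (A : 'M[R]_(m, k)) i j : A^T i j = A j i.
Proof. by rewrite mxE. Qed.
Lemma mulE (R : realType) m k p (A : 'M[R]_(m, k)) (B : 'M[R]_(k, p)) i j :
  (A *m B) i j = \sum_l A i l * B l j.
Proof. by rewrite mxE. Qed.
Lemma addE (R : realType) m k (A B : 'M[R]_(m, k)) i j : (A + B) i j = A i j + B i j.
Proof. by rewrite mxE. Qed.
Lemma subE (R : realType) m k (A B : 'M[R]_(m, k)) i j : (A - B) i j = A i j - B i j.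
Proof. by rewrite !mxE. Qed.

Section Main.
Variables (R : realType) (n d : nat) (e : rel 'I_n) (c : 'I_n -> R)
  (x v : nat -> 'M[R]_(n, d)).
Hypotheses (Hsym : symmetric e) (Hirr : irreflexive e) (Hconn : connected_graph e)
  (Hc : forall i, 0 < c i) (Hcd : forall i, c i * (deg e i)%:R < 1)
  (Hx : forall t, (1 <= t)%N -> x t = x t.-1 + v t)
  (Hv : forall t, (1 <= t)%N -> v t.+1 = transP e c *m v t).

Let P := transP e c.
Let M := ones R n *m (piv c)^T.

Lemma M_entry i j : M i j = piv c j 0.
Proof. by rewrite /M mulE big_ord1 trE /ones mxE mul1r. Qed.

Lemma pivPs s : (piv c)^T *m P ^+ s = (piv c)^T.
Proof.
elim: s => [|s IH]; first by rewrite expr0 mulmx1.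
by rewrite exprSr -mulmxE mulmxA IH piv_P.
Qed.

Lemma MPs s : M *m P ^+ s = M.
Proof. by rewrite /M -mulmxA pivPs. Qed.

Lemma GammaE t : Gamma_seq e c t = \sum_(s < t) (P ^+ s - M).
Proof.
by rewrite /Gamma_seq sumrB sumr_const card_ord addrC.
Qed.

Lemma vE s : v s.+1 = P ^+ s *m v 1%N.
Proof.
elim: s => [|s IH]; first by rewrite expr0 mul1mx.
by rewrite Hv // IH mulmxA mulmxE -exprS.
Qed.

Lemma xE t : x t = x 0%N + \sum_(s < t) P ^+ s *m v 1%N.
Proof.
elim: t => [|t IH]; first by rewrite big_ord0 addr0.
by rewrite Hx // /= IH big_ord_recr /= -vE addrA.
Qed.

Lemma relE t : rel_pos c (x t) = (1%:M - M) *m x 0%N + Gamma_seq e c t *m v 1%N.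
Proof.
have -> : rel_pos c (x t) = (1%:M - M) *m x t.
  by rewrite /rel_pos /mass_center mulmxA mulmxBl mul1mx.
rewrite xE mulmxDr mulmx_sumr GammaE mulmx_suml; congr (_ + _).
by apply: eq_bigr => s _; rewrite mulmxA mulmxBl mul1mx MPs.
Qed.

Lemma massE t : mass_center c (x t.+1) = mass_center c (x t) + (piv c)^T *m v 1%N.
Proof.
by rewrite /mass_center Hx //= mulmxDr vE mulmxA pivPs.
Qed.

Lemma pivPs_entry s j : \sum_k piv c k 0 * (P ^+ s) k j = piv c j 0.
Proof.
have := congr1 (fun A : 'M[R]_(1, n) => A 0 j) (pivPs s); rewrite /= mulE trE => <-.
by apply: eq_bigr => k _; rewrite trE.
Qed.

Lemma Gentry_cvg i j : cvgn (fun t => Gamma_seq e c t i j).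
Proof.
have n0 : (0 < n)%N := leq_ltn_trans (leq0n _) (ltn_ord i).
have P0 : forall a b, 0 <= P a b by move=> a b; apply: P_ge0.
have Pd : forall a, 0 < P a a by move=> a; apply: P_diag_gt0.
have Pe : forall a b, e a b -> 0 < P a b by move=> a b; apply: P_edge_gt0.
have P1 : forall a, \sum_b P a b = 1 by move=> a; apply: P_rowsum.
have Hpos : forall a b, 0 < (P ^+ n) a b := @powA_pos R n e P P0 Pd Pe Hconn.
have [dl [d0 d1 Hd]] := @exists_delta R _
  (fun ab : 'I_n * 'I_n => (P ^+ n) ab.1 ab.2) (fun ab => Hpos ab.1 ab.2).
have AN : forall a b, dl <= (P ^+ n) a b := fun a b => Hd (a, b).
have -> : (fun t => Gamma_seq e c t i j) = (fun t => \sum_(s < t) (P ^+ s - M) i j).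
  by apply/funext => t; rewrite GammaE summxE.
apply: (@cvg_bounded_sum R (fun s => (P ^+ s - M) i j) (fun s => (1 - dl) ^+ (s %/ n)) (n%:R / dl)).
  move=> s; rewrite subE M_entry -(pivPs_entry s).
  apply: dev_bound; first exact: bnd_pow.
    by move=> k; apply: piv_ge0.
  exact: piv_sum.
move=> t; have := @blocksum R n dl n0 d0 d1 t 0.
by rewrite add0n big_mkord /= div0n expr0 mulr1.
Qed.

Lemma core : exists Gamma : 'M[R]_n,
    [/\ (fun t => Gamma_seq e c t) @ \oo --> Gamma,
        (fun t => rel_pos c (x t)) @ \oo -->
          ((1%:M - ones R n *m (piv c)^T) *m x 0%N + Gamma *m v 1%N)
      & exists w : 'rV[R]_d, forall t,
          mass_center c (x t.+1) = mass_center c (x t) + w].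
Proof.
exists (\matrix_(i, j) lim ((fun t => Gamma_seq e c t i j) @ \oo)).
have HG : forall i j, (fun t => Gamma_seq e c t i j) @ \oo -->
    (\matrix_(i, j) lim ((fun t => Gamma_seq e c t i j) @ \oo)) i j.
  by move=> i j; rewrite mxE; exact: Gentry_cvg.
split.
- exact: cvg_mx_entry.
- under eq_fun do rewrite relE.
  apply: cvg_mx_entry => i l.
  under eq_fun do rewrite addE mulE.
  rewrite addE mulE.
  apply: cvgD; first exact: cvg_cst.
  rewrite mulE; under eq_fun do rewrite mulE.
  apply: cvg_sum_seq => k.
  apply: cvgM; [exact: HG | exact: cvg_cst].
- by exists ((piv c)^T *m v 1%N) => t; exact: massE.
Qed.

End Main.

Theorem lemma3p11 (R : realType) (n d : nat) (e : rel 'I_n) (c : 'I_n -> R)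
  (x v : nat -> 'M[R]_(n, d)) :
  simple_graph e ->
  connected_graph e ->
  (forall i, exists q : rat, c i = ratr q) ->
  (forall i, 0 < c i) ->
  (forall i, c i * (deg e i)%:R < 1) ->
  (forall t, (1 <= t)%N -> x t = x t.-1 + v t) ->
  (forall t, (1 <= t)%N -> v t.+1 = transP e c *m v t) ->
  exists Gamma : 'M[R]_n,
    [/\ (fun t => Gamma_seq e c t) @ \oo --> Gamma,
        (fun t => rel_pos c (x t)) @ \oo -->
          ((1%:M - ones R n *m (piv c)^T) *m x 0%N + Gamma *m v 1%N)
      & exists w : 'rV[R]_d, forall t,
          mass_center c (x t.+1) = mass_center c (x t) + w].
Proof.
move=> [Hs Hi] Hconn _ Hc Hcd Hx Hv.
exact: core.
Qed.
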